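(* Let $\mathcal{S}$ be the set of real numbers $c$ for which there exists a hereditary property of ordered graphs $\mathcal{P}$ with $\lim_{n \to \infty} |\mathcal{P}_n|^{1/n} = c$. Then for every integer $n \geqslant 2$ we have $n \in A^{n-1}(\mathcal{S})$, i.e. $n$ is a degree $n-1$ accumulation point from below of $\mathcal{S}$.
   Context: A hereditary property of ordered graphs is a collection of ordered graphs (graphs on $[n]$ with the natural order) closed under order-preserving isomorphism and under taking induced ordered subgraphs; $\mathcal{P}_n$ denotes its members with vertex set $[n]$. For $S\subset\mathbb{R}$, a point $c\in\mathbb{R}$ is an accumulation point from below of $S$ if for every $\varepsilon>0$, $S\cap(c-\varepsilon,c)\neq\emptyset$. $A^1(S)$ denotes the set of accumulation points from below of $S$, and $A^{m+1}(S)=A^1(A^m(S))$ for $m\in\mathbb{N}$. *)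

(* Defs.v *)
From HB Require Import structures.
From mathcomp Require Import all_boot all_order all_algebra.
From mathcomp Require Import all_classical all_reals all_analysis.
Set Implicit Arguments. Unset Strict Implicit. Unset Printing Implicit Defensive.
Import Order.TTheory GRing.Theory Num.Theory numFieldNormedType.Exports.
Local Open Scope classical_set_scope.
Local Open Scope ring_scope.

(* An ordered graph on [n] = {0,...,n-1} (natural order) is given by its
   adjacency indicator on pairs of vertices, required to be irreflexive and
   symmetric (a simple graph). *)
Definition adj (n : nat) := {ffun 'I_n * 'I_n -> bool}.

Definition is_ograph (n : nat) (G : adj n) : bool :=
  [forall i : 'I_n, ~~ G (i, i)] && [forall i : 'I_n, forall j : 'I_n, G (i, j) == G (j, i)].

(* The ordered graph induced by G on the image of a strictly increasing map
   f : [m] -> [n], relabelled order-preservingly by [m]. *)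
Definition induced (m n : nat) (f : 'I_m -> 'I_n) (G : adj n) : adj m :=
  [ffun p : 'I_m * 'I_m => G (f p.1, f p.2)].

Definition strict_incr (m n : nat) (f : 'I_m -> 'I_n) : Prop :=
  forall i j : 'I_m, (i < j)%N -> (f i < f j)%N.

(* Closure under order-preserving isomorphism is automatic in this
   representation (the only order-preserving bijection of [n] is the identity). *)
Definition ograph_property := forall n : nat, pred (adj n).

Definition hereditary (P : ograph_property) : Prop :=
  forall (m n : nat) (f : 'I_m -> 'I_n) (G : adj n),
    is_ograph G -> P n G -> strict_incr f -> P m (induced f G).

Definition Pcard (P : ograph_property) (n : nat) : nat :=
  #|[set G : adj n | is_ograph G && P n G]|.

Definition growth_constants (R : realType) : set R :=
  [set c : R | exists P : ograph_property, hereditary P /\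
     (fun n : nat => ((Pcard P n)%:R : R) `^ (n%:R^-1)) @ \oo --> c].

Definition acc_below (R : realType) (S : set R) : set R :=
  [set c | forall e : R, 0 < e -> exists x, S x /\ c - e < x /\ x < c].

Definition acc_below_iter (R : realType) (m : nat) (S : set R) : set R :=
  iter m (@acc_below R) S.

(* Main.v *)
Require Import Defs.
From HB Require Import structures.
From mathcomp Require Import all_boot all_order all_algebra.
From mathcomp Require Import all_classical all_reals all_analysis.
From mathcomp Require Import zify ring lra.
Set Implicit Arguments. Unset Strict Implicit. Unset Printing Implicit Defensive.
Import Order.TTheory GRing.Theory Num.Theory numFieldNormedType.Exports.

Section Codes.
Variables (k : nat) (cap : nat -> nat).

Definition Lc (c : seq (nat * bool)) i := (nth (0, false) c i).1.
Definition Mc (c : seq (nat * bool)) i := (nth (0, false) c i).2.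
Definition capok a t := (cap a == 0) || (t <= cap a).

Definition cvalid (c : seq (nat * bool)) : Prop :=
  [/\ (forall i, i < size c -> Lc c i < k),
      (forall i, Mc c i -> i.+1 < size c /\ Lc c i = Lc c i.+1) &
      (forall i r, (forall s, s < r -> Mc c (i + s)) -> capok (Lc c i) r.+1)].

Definition capT a n := if cap a == 0 then n else minn n (cap a).
Definition blocks n := [seq (a, t) | a <- iota 0 k, t <- iota 1 (capT a n)].
Definition block (a t : nat) : seq (nat * bool) := nseq t.-1 (a, true) ++ [:: (a, false)].

Fixpoint codesF f n : seq (seq (nat * bool)) :=
  match f with
  | 0 => if n is 0 then [:: [::]] else [::]
  | f'.+1 => if n is 0 then [:: [::]] else
       [seq block p.1 p.2 ++ c | p <- blocks n, c <- codesF f' (n - p.2)]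
  end.

Lemma size_block a t : 0 < t -> size (block a t) = t.
Proof. by case: t => // t _; rewrite size_cat size_nseq addn1. Qed.

Lemma nth_blockcat a t c i : 0 < t ->
  nth (0, false) (block a t ++ c) i =
  if i < t then (a, i.+1 < t) else nth (0, false) c (i - t).
Proof.
move=> t0; rewrite nth_cat size_block //; case: ifP => // it.
rewrite nth_cat size_nseq; case: t t0 it => // t _ it /=.
rewrite nth_nseq; case: ifP => [it'|]; first by rewrite ltnS it'.
move=> /negbT; rewrite -leqNgt => ti.
have -> : i = t by apply/eqP; rewrite eqn_leq ti -ltnS it.
by rewrite subnn ltnn.
Qed.

Lemma mem_blocks n a t : ((a, t) \in blocks n) = (a < k) && (0 < t <= capT a n).
Proof.
apply/allpairsPdep/andP => [[x [y [xin yin [-> ->]]]]|[ak tin]].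
  by move: xin yin; rewrite !mem_iota /= add0n add1n ltnS => -> ->.
by exists a, t; split => //; rewrite mem_iota //= add1n ltnS.
Qed.

Lemma capT_le a n : capT a n <= n.
Proof. by rewrite /capT; case: ifP => // _; exact: geq_minl. Qed.

Lemma cvalid_nil : cvalid [::].
Proof.
split; [by [] | by move=> i; rewrite /Mc nth_nil |].
move=> i r H; case: r H => [|r] H; first by rewrite /capok; case: (cap _).
by have := H 0 isT; rewrite /Mc nth_nil.
Qed.

Lemma cvalid_blockcat a t c n : (a, t) \in blocks n -> cvalid c ->
  cvalid (block a t ++ c).
Proof.
rewrite mem_blocks => /and3P[ak t0 tc] [c1 c2 c3].
have E := nth_blockcat a c _ t0.
split.
- move=> i; rewrite size_cat size_block // /Lc E; case: ifP => // /negbT.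
  rewrite -leqNgt => ti ilt; apply: c1; lia.
- move=> i; rewrite /Mc /Lc !E size_cat size_block //.
  case: ifP => it /=.
    by move=> ti; rewrite ti /=; split => //; lia.
  move=> /(c2 (i - t)) [H1 H2].
  have -> : (i.+1 < t) = false by lia.
  split; first by lia.
  by move: H2; rewrite /Lc; have -> : i.+1 - t = (i - t).+1 by lia.
- move=> i r H; rewrite /Lc E; case: ifP => it /=.
    have ir : i + r < t.
      rewrite ltnNge; apply/negP => tr.
      have := H (t.-1 - i); rewrite /Mc E.
      have -> : i + (t.-1 - i) = t.-1 by lia.
      have -> : t.-1 < t by lia.
      have hs : t.-1 - i < r by lia.
      by rewrite /= prednK // ltnn => /(_ hs).
    move: tc; rewrite /capok /capT; case: eqP => //= _ tc; lia.
  have -> : (nth (0, false) c (i - t)).1 = Lc c (i - t) by [].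
  apply: c3 => s sr; have := H s sr; rewrite /Mc E.
  have -> : (i + s < t) = false by lia.
  by have -> : i + s - t = i - t + s by lia.
Qed.


Lemma cvalid_drop c t : cvalid c -> cvalid (drop t c).
Proof.
move=> [c1 c2 c3]; split.
- by move=> i; rewrite size_drop /Lc nth_drop => ?; apply: c1; lia.
- move=> i; rewrite /Mc /Lc !nth_drop size_drop => /c2 [H1 H2].
  split; first by lia. by move: H2; rewrite /Lc addnS.
- move=> i r H; rewrite /Lc nth_drop; apply: c3 => s sr.
  by have := H s sr; rewrite /Mc nth_drop addnA.
Qed.

Lemma cvalid_decomp c n : cvalid c -> size c = n -> 0 < n ->
  exists a t c', [/\ (a, t) \in blocks n, c = block a t ++ c',
                     cvalid c' & size c' = n - t].
Proof.
move=> cv; have [c1 c2 c3] := cv; move=> sc n0.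
set P := (fun x : nat * bool => ~~ x.2).
have hasP : has P c.
  apply/hasP; exists (nth (0, false) c n.-1); first by rewrite mem_nth // sc; lia.
  rewrite /P; apply/negP => M.
  by have [] := c2 n.-1 M; rewrite sc; lia.
have fl := has_find P c; rewrite hasP in fl.
set f := find P c in fl.
set t := f.+1; set a := Lc c 0.
have Mbefore : forall s, s < f -> Mc c s.
  by move=> s sf; have := before_find (0, false) sf; rewrite /P /Mc => /negbFE.
have Mat : Mc c f = false.
  by have := nth_find (0, false) hasP; rewrite /P /Mc => /negbTE.
have Lall : forall s, s < t -> Lc c s = a.
  elim=> // s IH st; rewrite -IH; last by lia.
  by have [_ ->] := c2 s (Mbefore s st).
have tn : t <= n by rewrite -sc.
have capa : capok a t.
  by apply: (c3 0 f) => s sf; rewrite add0n; exact: Mbefore.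
exists a, t, (drop t c); split.
- rewrite mem_blocks; apply/and3P; split => //.
    by rewrite /a; apply: c1; lia.
  move: capa; rewrite /capok /capT; case: eqP => //= _ ta.
  by rewrite leq_min tn.
- rewrite -[LHS](cat_take_drop t); congr (_ ++ _).
  apply: (@eq_from_nth _ (0, false)).
    by rewrite size_take size_block // sc; case: ifP => //; lia.
  move=> i; rewrite size_take sc.
  move=> it; have it' : i < t by move: it; case: ifP => //; lia.
  rewrite nth_take // -[block a t]cats0 nth_blockcat // it'.
  rewrite [nth _ _ _]surjective_pairing; congr (_, _).
    by have := Lall i it'.
  have -> : (nth (0, false) c i).2 = Mc c i by [].
  case: (ltnP i.+1 t) => ti.
    by apply: Mbefore; lia.
  by have -> : i = f by lia.
- exact: cvalid_drop.
- by rewrite size_drop sc.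
Qed.


Lemma codesF_mem f n c : n <= f -> (c \in codesF f n) <-> (cvalid c /\ size c = n).
Proof.
elim: f n c => [|f IH] n c nf.
  have -> : n = 0 by lia.
  rewrite /= inE; split => [/eqP -> |[_ /size0nil ->]] //; split => //; exact: cvalid_nil.
case: n nf => [|n] nf.
  rewrite /= inE; split => [/eqP -> |[_ /size0nil ->]] //; split => //; exact: cvalid_nil.
split.
  move=> /allpairsPdep [[a t] [c' [pin cin ->]]].
  have tin := pin; rewrite mem_blocks in tin; move/and3P: tin => [_ t0 tc].
  have nf' : n.+1 - t <= f by lia.
  have [cv sc] := (IH _ c' nf').1 cin.
  split; first exact: (cvalid_blockcat pin cv).
  rewrite size_cat size_block // sc /=; have := capT_le a n.+1; lia.
move=> [cv sc]; have [a [t [c' [pin -> cv' sc']]]] := cvalid_decomp cv sc isT.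
apply/allpairsPdep; exists (a, t), c'; split => //.
have tin := pin; rewrite mem_blocks in tin; move/and3P: tin => [_ t0 tc].
by apply/IH => //=; lia.
Qed.

Lemma uniq_allpairs2 (S T R : eqType) (f : S -> T -> R) (s : seq S) (t : S -> seq T) :
  uniq s -> (forall x, uniq (t x)) ->
  (forall x x' y y', x \in s -> x' \in s -> f x y = f x' y' -> x = x' /\ y = y') ->
  uniq [seq f x y | x <- s, y <- t x].
Proof.
move=> us ut inj; apply: (@allpairs_uniq_dep S (fun _ => T)) => //.
move=> [x y] [x' y'] /allpairsPdep [x1 [y1 [x1s _ [e1 _]]]] /allpairsPdep [x2 [y2 [x2s _ [e2 _]]]] /=.
subst x1 x2; by move=> /inj [] // -> ->.
Qed.

Lemma blockcat_inj a t c a' t' c' : 0 < t -> 0 < t' ->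
  block a t ++ c = block a' t' ++ c' -> [/\ a = a', t = t' & c = c'].
Proof.
move=> t0 t0' E.
have F : forall a t c, 0 < t -> find (fun x : nat * bool => ~~ x.2) (block a t ++ c) = t.-1.
  move=> a1 t1 c1 _; rewrite /block -catA find_cat.
  have -> : has (fun x : nat * bool => ~~ x.2) (nseq t1.-1 (a1, true)) = false.
    by apply/hasP => [[x /nseqP [-> _]]].
  by rewrite size_nseq /= addn0.
have tt : t = t'.
  have := F a t c t0; rewrite E F //; lia.
subst t'.
have aa : a = a'.
  have := congr1 (fun s => (nth (0, false) s 0).1) E.
  by rewrite /= !nth_blockcat // t0.
subst a'; split => //.
by have := congr1 (drop t) E; rewrite !drop_size_cat // size_block.
Qed.

Lemma blocks_uniq n : uniq (blocks n).
Proof.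
apply: uniq_allpairs2; [exact: iota_uniq | move=> x; exact: iota_uniq |].
by move=> x x' y y' _ _ [-> ->].
Qed.

Lemma codesF_uniq f n : uniq (codesF f n).
Proof.
elim: f n => [|f IH] n; first by case: n.
case: n => [//|n] /=.
apply: uniq_allpairs2 => //; first exact: blocks_uniq.
move=> [a t] [a' t'] y y' /=; rewrite !mem_blocks => /and3P[_ t0 _] /and3P[_ t0' _].
by move=> /blockcat_inj => /(_ t0 t0') [-> -> ->].
Qed.

Definition acount n := size (codesF n n).

Lemma acount0 : acount 0 = 1. Proof. by []. Qed.

Lemma acount_rec n : 0 < n -> acount n = \sum_(p <- blocks n) acount (n - p.2).
Proof.
case: n => // n _; rewrite /acount /= size_allpairs_dep sumnE big_map.
apply: eq_big_seq => [[a t]]; rewrite mem_blocks => /and3P[_ t0 tc] /=.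
apply: perm_size; apply: uniq_perm; try exact: codesF_uniq.
move=> c; apply/idP/idP => /codesF_mem H; apply/codesF_mem;
  (try by []); (try lia); apply: H => //; lia.
Qed.

End Codes.

Definition enc n (c : seq (nat * bool)) : adj n :=
  [ffun p : 'I_n * 'I_n => let i := nat_of_ord p.1 in let j := nat_of_ord p.2 in
     [&& i != j, Lc c i == Lc c j, ~~ ((j == i.+1) && Mc c i) & ~~ ((i == j.+1) && Mc c j)]].

Definition Pk k cap : ograph_property :=
  fun n => [pred G : adj n | has (fun c => enc n c == G) (codesF k cap n n)].

Lemma enc_ograph n c : is_ograph (enc n c).
Proof.
apply/andP; split; apply/forallP => i; first by rewrite ffunE /= eqxx.
apply/forallP => j; rewrite !ffunE /=; apply/eqP.
rewrite [j == i :> nat]eq_sym [Lc c j == _]eq_sym.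
by case: (i == j :> nat); case: (Lc c i == Lc c j); rewrite //= andbC.
Qed.

Lemma Fnext (F : nat -> nat) i j : (forall x y, x < y -> F x < F y) ->
  (F j == (F i).+1) = (j == i.+1) && (F i.+1 == (F i).+1).
Proof.
move=> Finc; case: (eqVneq j i.+1) => [-> //|nji] /=.
apply/negP => /eqP E; case: (ltngtP j i) => ji.
- have := Finc _ _ ji; lia.
- case: (ltngtP j i.+1) => ji'; try lia.
  have := Finc _ _ ji'; have := Finc _ _ (ltnSn i); lia.
- subst j; lia.
Qed.

Lemma Pk_hereditary k cap : hereditary (Pk k cap).
Proof.
move=> m n f G _ /hasP [c cin /eqP <-] finc.
have [[c1 c2 c3] sc] := (codesF_mem k cap c (leqnn n)).1 cin.
pose F (i : nat) := if @insub _ (fun x => x < m) _ i is Some o then val (f o) else n + i.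
have F_ord : forall o : 'I_m, F o = f o by move=> o; rewrite /F valK.
have F_big : forall i, m <= i -> F i = n + i.
  by move=> i mi; rewrite /F insubF // ltnNge mi.
have F_lt : forall i, i < m -> F i < n.
  by move=> i im; rewrite -[i]/(val (Ordinal im)) F_ord.
have Finc : forall x y, x < y -> F x < F y.
  move=> x y xy; case: (ltnP y m) => ym.
    have xm : x < m by lia.
    by rewrite -[x]/(val (Ordinal xm)) -[y]/(val (Ordinal ym)) !F_ord; apply: finc.
  rewrite (F_big y) //; case: (ltnP x m) => xm.
    by have := F_lt x xm; lia.
  by rewrite F_big //; lia.
pose c' := mkseq (fun i => (Lc c (F i), Mc c (F i) && (F i.+1 == (F i).+1))) m.
have Lc' : forall i, i < m -> Lc c' i = Lc c (F i).
  by move=> i im; rewrite /Lc nth_mkseq.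
have Mc' : forall i, Mc c' i = (i < m) && Mc c (F i) && (F i.+1 == (F i).+1).
  move=> i; rewrite /Mc; case: (ltnP i m) => im.
    by rewrite nth_mkseq.
  by rewrite nth_default // size_mkseq.
have cv' : cvalid k cap c'.
  split.
  - by move=> i; rewrite size_mkseq => im; rewrite Lc' //; apply: c1; rewrite sc F_lt.
  - move=> i; rewrite Mc' size_mkseq => /andP [/andP [im M] /eqP E].
    have im1 : i.+1 < m.
      rewrite ltnNge; apply/negP => mi; move: E; rewrite F_big //.
      have := F_lt i im; lia.
    split => //; rewrite !Lc' //; have [_ ->] := c2 _ M; by rewrite E.
  - move=> i r H; case: r H => [|r] H.
      by rewrite /capok; case: (cap _) => //.
    have im : i < m by have := H 0 isT; rewrite Mc' addn0 => /andP [/andP []].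
    have Fs : forall s, s <= r.+1 -> F (i + s) = F i + s.
      elim=> [|s IH] sr; first by rewrite !addn0.
      have := H s (ltac:(lia)); rewrite Mc' => /andP [_ /eqP E].
      by rewrite addnS E IH; lia.
    rewrite Lc' //; apply: c3 => s sr.
    have := H s sr; rewrite Mc' Fs; [by move=> /andP [/andP [_ ->]] | lia].
have c'in : c' \in codesF k cap m m by apply/codesF_mem => //; rewrite size_mkseq.
apply/hasP; exists c' => //; apply/eqP/ffunP => [[i j]].
rewrite !ffunE /= !Lc' // !Mc' !ltn_ord /= -!F_ord.
have inj : (i == j :> nat) = (F i == F j).
  apply/eqP/eqP => [-> //|E]; case: (ltngtP i j) => // ij.
  - by have := Finc _ _ ij; rewrite E ltnn.
  - by have := Finc _ _ ij; rewrite E ltnn.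
rewrite inj (Fnext i j Finc) (Fnext j i Finc).
by case: (j == i.+1 :> nat); case: (i == j.+1 :> nat); case: (Mc c (F i)); case: (Mc c (F j));
   case: (F i.+1 == (F i).+1); case: (F j.+1 == (F j).+1).
Qed.

Lemma Pcard_upper k cap n : Pcard (Pk k cap) n <= acount k cap n.
Proof.
rewrite /Pcard; apply: (@leq_trans #|[pred G in map (enc n) (codesF k cap n n)]|).
  apply: subset_leq_card; apply/fintype.subsetP => G /set_mem /= /andP [_ HP].
  have [c cin /eqP <-] := hasP HP.
  by rewrite inE; apply: map_f.
by rewrite /acount -(size_map (enc n)); exact: card_size.
Qed.

Definition anchor k : seq (nat * bool) := [seq (a, false) | a <- iota 0 k].

Lemma nth_anchor k c i : nth (0, false) (anchor k ++ c) i =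
  if i < k then (i, false) else nth (0, false) c (i - k).
Proof.
rewrite nth_cat size_map size_iota; case: ifP => // ik.
by rewrite (nth_map 0) ?size_iota // nth_iota.
Qed.

Lemma cvalid_anchor k cap c : cvalid k cap c -> cvalid k cap (anchor k ++ c).
Proof.
move=> [c1 c2 c3]; split.
- move=> i; rewrite size_cat size_map size_iota /Lc nth_anchor.
  by case: ifP => //= ik ilt; apply: c1; lia.
- move=> i; rewrite /Mc /Lc !nth_anchor size_cat size_map size_iota.
  case: ifP => //= ik /c2 [H1 H2]; have -> : (i.+1 < k) = false by lia.
  split; first lia. by move: H2; rewrite /Lc; have -> : i.+1 - k = (i - k).+1 by lia.
- move=> i r H; case: r H => [|r] H; first by rewrite /capok; case: (cap _).
  have ik : k <= i.
    by have := H 0 isT; rewrite /Mc nth_anchor addn0; case: ifP => //; lia.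
  rewrite /Lc nth_anchor ltnNge ik /=.
  apply: c3 => s sr; have := H s sr; rewrite /Mc nth_anchor.
  have -> : (i + s < k) = false by lia.
  by have -> : i + s - k = i - k + s by lia.
Qed.

Lemma enc_anchor_inj k cap N c1 c2 : cvalid k cap c1 -> cvalid k cap c2 ->
  size c1 = N -> size c2 = N ->
  enc (k + N) (anchor k ++ c1) = enc (k + N) (anchor k ++ c2) -> c1 = c2.
Proof.
move=> [v11 v12 v13] [v21 v22 v23] s1 s2 E.
have LA : forall c i, Lc (anchor k ++ c) i = if i < k then i else Lc c (i - k).
  by move=> c i; rewrite /Lc nth_anchor; case: ifP.
have MA : forall c i, Mc (anchor k ++ c) i = if i < k then false else Mc c (i - k).
  by move=> c i; rewrite /Mc nth_anchor; case: ifP.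
have Let : forall i, i < N -> Lc c1 i = Lc c2 i.
  move=> i iN.
  have val : forall c a (ha : a < k + N) (hb : k + i < k + N), a < k ->
     enc (k + N) (anchor k ++ c) (Ordinal ha, Ordinal hb) = (a == Lc c i).
    move=> c a ha hb ak; rewrite ffunE /= !LA !MA ak.
    have -> : (k + i < k) = false by lia.
    have -> : k + i - k = i by lia.
    have -> : (a == k + i) = false by lia.
    have -> : (a == (k + i).+1) = false by lia.
    by rewrite andbF /= andbT.
  have hb : k + i < k + N by lia.
  have ha : Lc c1 i < k + N by have := v11 i (ltac:(lia)); lia.
  have := congr1 (fun G : adj (k + N) => G (Ordinal ha, Ordinal hb)) E.
  rewrite !val ?eqxx; [|by apply: v11; lia|by apply: v11; lia].
  by move=> /esym /eqP.
apply: (@eq_from_nth _ (0, false)); first by rewrite s1 s2.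
move=> i; rewrite s1 => iN.
rewrite [nth _ c1 i]surjective_pairing [nth _ c2 i]surjective_pairing.
have -> : (nth (0, false) c1 i).1 = Lc c1 i by [].
have -> : (nth (0, false) c2 i).1 = Lc c2 i by [].
have -> : (nth (0, false) c1 i).2 = Mc c1 i by [].
have -> : (nth (0, false) c2 i).2 = Mc c2 i by [].
rewrite Let //; congr (_, _).
case: (ltnP i.+1 N) => iN'; last first.
  have -> : Mc c1 i = false by apply/negP => /v12 []; lia.
  have -> : Mc c2 i = false by apply/negP => /v22 []; lia.
  by [].
have ha : k + i < k + N by lia.
have hb : k + i.+1 < k + N by lia.
have val : forall c, enc (k + N) (anchor k ++ c) (Ordinal ha, Ordinal hb) =
    (Lc c i == Lc c i.+1) && ~~ Mc c i.
  move=> c; rewrite ffunE /= !LA !MA.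
  have -> : (k + i < k) = false by lia.
  have -> : (k + i.+1 < k) = false by lia.
  have -> : k + i - k = i by lia.
  have -> : k + i.+1 - k = i.+1 by lia.
  have -> : (k + i == k + i.+1) = false by lia.
  have -> : (k + i.+1 == (k + i).+1) = true by lia.
  have -> : (k + i == (k + i.+1).+1) = false by lia.
  by case: (Lc c i == _); case: (Mc c i).
have := congr1 (fun G : adj (k + N) => G (Ordinal ha, Ordinal hb)) E.
rewrite !val Let // (Let i.+1) //.
case M1 : (Mc c1 i); case M2 : (Mc c2 i) => //=.
- by have [_] := v12 i M1; rewrite Let // (Let i.+1) // => ->; rewrite eqxx.
- by have [_] := v22 i M2; move=> ->; rewrite eqxx.
Qed.

Lemma Pcard_lower k cap N : acount k cap N <= Pcard (Pk k cap) (k + N).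
Proof.
rewrite /Pcard cardE /acount.
rewrite -(size_map (fun c => enc (k + N) (anchor k ++ c))).
apply: uniq_leq_size.
  rewrite map_inj_in_uniq; first exact: codesF_uniq.
  move=> c1 c2 H1 H2.
  have [v1 s1] := (codesF_mem k cap c1 (leqnn N)).1 H1.
  have [v2 s2] := (codesF_mem k cap c2 (leqnn N)).1 H2.
  exact: (enc_anchor_inj v1 v2 s1 s2).
move=> G /mapP [c H ->].
have [v s] := (codesF_mem k cap c (leqnn N)).1 H.
rewrite mem_enum; apply: mem_set => /=.
rewrite enc_ograph /=.
apply/hasP; exists (anchor k ++ c) => //; apply/codesF_mem => //.
split; first exact: cvalid_anchor.
by rewrite size_cat size_map size_iota s.
Qed.

Local Open Scope classical_set_scope.
Local Open Scope ring_scope.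

Section Ana.
Variable R : realType.

Definition geo (c : nat) (y : R) := \sum_(t <- iota 1 c) y ^+ t.
Definition gfun (cap : nat -> nat) a (y : R) :=
  if cap a == 0%N then y / (1 - y) else geo (cap a) y.
Definition Phi k cap (y : R) := \sum_(a <- iota 0 k) gfun cap a y.

Lemma geo_closed c y : (1 - y) * geo c y = y - y ^+ c.+1.
Proof.
elim: c => [|c IH]; first by rewrite /geo big_nil mulr0 expr1 subrr.
rewrite /geo.
have -> : iota 1 c.+1 = iota 1 c ++ [:: c.+1] by rewrite -[c.+1]addn1 iotaD /= add1n addn1.
rewrite big_cat /= big_cons big_nil addr0 mulrDr.
rewrite -/(geo c y) IH exprS !exprS; ring.
Qed.

Lemma geo_ge0 c y : 0 <= y -> 0 <= geo c y.
Proof. by move=> y0; apply: sumr_ge0 => t _; apply: exprn_ge0. Qed.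

Lemma geo_eq c y : y != 1 -> geo c y = (y - y ^+ c.+1) / (1 - y).
Proof.
move=> y1; rewrite -geo_closed [(1 - y) * _]mulrC mulfK //.
by rewrite subr_eq0 eq_sym.
Qed.

Lemma geo_le c y : 0 <= y < 1 -> geo c y <= y / (1 - y).
Proof.
move=> /andP [y0 y1]; rewrite geo_eq ?lt_eqF //.
rewrite ler_pM2r ?invr_gt0 ?subr_gt0 //.
by rewrite lerBlDr lerDl exprn_ge0.
Qed.

Lemma geo_mono c c' y : (c <= c')%N -> 0 <= y -> geo c y <= geo c' y.
Proof.
move=> cc y0; rewrite /geo -(subnKC cc) iotaD big_cat /= lerDl.
by apply: sumr_ge0 => t _; apply: exprn_ge0.
Qed.

Lemma sum_const_iota k (b : R) : \sum_(a <- iota 0 k) b = k%:R * b.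
Proof.
elim: k => [|k IH]; first by rewrite big_nil mul0r.
have -> : iota 0 k.+1 = iota 0 k ++ [:: k] by rewrite -[k.+1]addn1 iotaD /= add0n.
by rewrite big_cat /= big_cons big_nil IH -addn1 natrD; ring.
Qed.


Lemma blocks_sum k cap N y :
  \sum_(p <- blocks k cap N) y ^+ p.2 = \sum_(a <- iota 0 k) geo (capT cap a N) y.
Proof. by rewrite /blocks big_allpairs_dep. Qed.

Lemma blocks_sum_le k cap N y : 0 <= y < 1 ->
  \sum_(p <- blocks k cap N) y ^+ p.2 <= Phi k cap y.
Proof.
move=> /andP [y0 y1]; rewrite blocks_sum; apply: ler_sum => a _.
rewrite /gfun /capT; case: eqP => _; first by apply: geo_le; rewrite y0.
by apply: geo_mono => //; exact: geq_minr.
Qed.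

Lemma blocks_sum_ge k cap N M y : 0 <= y < 1 ->
  (forall a, (a < k)%N -> (cap a <= M)%N) -> (M <= N)%N ->
  Phi k cap y - k%:R * (y ^+ M.+1 / (1 - y)) <= \sum_(p <- blocks k cap N) y ^+ p.2.
Proof.
move=> /andP [y0 y1] capM MN.
rewrite blocks_sum /Phi -sum_const_iota -sumrB big_seq [X in _ <= X]big_seq.
apply: ler_sum => a; rewrite mem_iota add0n => /andP [_ ak].
have y1' : 0 < 1 - y by rewrite subr_gt0.
have b0 : 0 <= y ^+ M.+1 / (1 - y) by rewrite divr_ge0 ?exprn_ge0 // ltW.
rewrite /gfun /capT; case: eqP => ca.
  rewrite geo_eq ?lt_eqF // mulrBl lerB //.
  rewrite ler_pM2r ?invr_gt0 //; apply: ler_wiXn2l => //; first exact: ltW.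
have -> : minn N (cap a) = cap a by apply/minn_idPr; apply: leq_trans (capM a ak) MN.
by rewrite lerBlDr lerDl.
Qed.

Lemma acount_pos k cap N : (0 < k)%N -> (0 < acount k cap N)%N.
Proof.
move=> k0; elim/ltn_ind: N => N IH.
case: N IH => [|N] IH; first by rewrite acount0.
rewrite acount_rec //.
have pin : (0%N, 1%N) \in blocks k cap N.+1.
  rewrite mem_blocks k0 /= /capT; case: eqP => //= /eqP c0.
  by rewrite leq_min /=; rewrite lt0n.
rewrite (bigD1_seq _ pin (blocks_uniq k cap N.+1)) /=.
by apply: leq_trans (leq_addr _ _); apply: IH; rewrite subn1.
Qed.

Lemma acount_upper k cap (y : R) : 0 < y ->
  (forall N, \sum_(p <- blocks k cap N) y ^+ p.2 <= 1) ->
  forall N, (acount k cap N)%:R * y ^+ N <= 1.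
Proof.
move=> y0 H; elim/ltn_ind => N IH.
case: N IH => [|N] IH; first by rewrite acount0 mul1r expr0.
rewrite acount_rec // natr_sum mulr_suml; apply: le_trans (H N.+1).
rewrite big_seq [X in _ <= X]big_seq; apply: ler_sum => -[a t].
rewrite mem_blocks => /and3P [_ t0 tc] /=.
have tN : (t <= N.+1)%N := leq_trans tc (capT_le _ _ _).
rewrite -[in y ^+ N.+1](subnK tN) exprD mulrA.
rewrite -[X in _ <= X]mul1r ler_pM2r ?exprn_gt0 //.
apply: IH; lia.
Qed.

Lemma acount_lower k cap (y : R) M : 0 < y -> y <= 1 -> (0 < k)%N ->
  (forall N, (M <= N)%N -> 1 <= \sum_(p <- blocks k cap N) y ^+ p.2) ->
  forall N, y ^+ M <= (acount k cap N)%:R * y ^+ N.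
Proof.
move=> y0 y1 k0 H; elim/ltn_ind => N IH.
have ap := acount_pos cap N k0.
case: (ltnP N M) => NM.
  apply: (le_trans (ler_wiXn2l (ltW y0) y1 (ltnW NM))).
  apply: ler_peMl; first exact: (exprn_ge0 _ (ltW y0)).
  by rewrite ler1n.
case: N IH ap NM => [|N] IH ap NM.
  by rewrite acount0 mul1r expr0 exprn_ile1 // ltW.
rewrite acount_rec // natr_sum mulr_suml.
apply: (le_trans _ (_ : y ^+ M * \sum_(p <- blocks k cap N.+1) y ^+ p.2 <= _)).
  by rewrite -[X in X <= _]mulr1 ler_pM2l ?exprn_gt0 //; apply: H.
rewrite mulr_sumr big_seq [X in _ <= X]big_seq; apply: ler_sum => -[a t].
rewrite mem_blocks => /and3P [_ t0 tc] /=.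
have tN : (t <= N.+1)%N := leq_trans tc (capT_le _ _ _).
rewrite -[in y ^+ N.+1](subnK tN) exprD mulrA ler_pM2r ?exprn_gt0 //.
apply: IH; lia.
Qed.


Lemma frac_lt (y z : R) : 0 <= y -> y < z -> z < 1 -> y / (1 - y) < z / (1 - z).
Proof.
move=> y0 yz z1.
have y1 : y < 1 by apply: lt_trans z1.
have e : forall x : R, x < 1 -> x / (1 - x) = (1 - x)^-1 - 1.
  move=> x x1; have hx : 1 - x != 0 by rewrite subr_eq0 eq_sym lt_eqF.
  by field.
rewrite !e // ltrD2r ltf_pV2 ?posrE ?subr_gt0 //.
by rewrite ltrD2l ltrN2.
Qed.

Lemma gfun_lt cap a (y z : R) : 0 <= y -> y < z -> z < 1 -> gfun cap a y < gfun cap a z.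
Proof.
move=> y0 yz z1; rewrite /gfun; case: eqP => ca; first exact: frac_lt.
have z0 : 0 <= z by apply: le_trans (ltW yz).
case: (cap a) ca => // c _; rewrite /geo /= !big_cons expr1.
apply: ltr_leD => //; apply: ler_sum => t _.
by apply: lerXn2r; rewrite ?nnegrE // ltW.
Qed.

Lemma Phi_lt k cap (y z : R) : (0 < k)%N -> 0 <= y -> y < z -> z < 1 ->
  Phi k cap y < Phi k cap z.
Proof.
move=> k0 y0 yz z1; rewrite /Phi; case: k k0 => // k _.
rewrite /= !big_cons; apply: ltr_leD; first exact: gfun_lt.
by apply: ler_sum => a _; apply: ltW; apply: gfun_lt.
Qed.

Lemma Phi_le k cap (y z : R) : 0 <= y -> y <= z -> z < 1 ->
  Phi k cap y <= Phi k cap z.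
Proof.
move=> y0; rewrite le_eqVlt => /predU1P [-> //|yz z1].
by apply: ler_sum => a _; apply: ltW; apply: gfun_lt.
Qed.

End Ana.

Lemma eventually_small (R : realType) (z d : R) : 0 <= z < 1 -> 0 < d ->
  exists N, forall n, (N <= n)%N -> z ^+ n <= d.
Proof.
move=> /andP [z0 z1] d0.
have := @cvg_expr R z; rewrite ger0_norm // => /(_ z1) /cvgrPdist_le /(_ d d0).
move=> [N _ HN]; exists N => n Nn; have := HN n Nn.
by rewrite sub0r normrN ger0_norm // exprn_ge0.
Qed.

Lemma powR_root (R : realType) (x : R) N : 0 <= x -> (0 < N)%N -> (x ^+ N) `^ (N%:R^-1) = x.
Proof.
move=> x0 N0; rewrite -powR_mulrn // -powRrM mulfV ?powRr1 //.
by rewrite pnatr_eq0 -lt0n.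
Qed.

Lemma key_aux (R : realType) (a e N : R) : 0 < N -> - (a * 2) <= N * e -> - (e / 2) <= N^-1 * a.
Proof.
move=> N0 h; rewrite [N^-1 * a]mulrC ler_pdivlMr //; nra.
Qed.

Lemma fin_aux (R : realType) (y w c u r L e : R) : 0 < w -> c * w <= u ->
  1 + r * L <= c -> - (e / 2) <= r * L * w -> y - e / 2 <= w -> y - u <= e.
Proof.
move=> w0 h1 h2 h3 h4.
have h5 : (1 + r * L) * w <= c * w by rewrite ler_pM2r.
nra.
Qed.

Lemma in_S (R : realType) k cap (y : R) : (0 < k)%N -> 0 < y -> y < 1 ->
  Phi k cap y = 1 -> @growth_constants R y^-1.
Proof.
move=> k0 y0 y1 Py.
exists (Pk k cap); split; first exact: Pk_hereditary.
have yi1 : 1 < y^-1 by rewrite invf_gt1.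
have up : forall N, (0 < N)%N -> (Pcard (Pk k cap) N)%:R `^ (N%:R^-1) <= y^-1.
  move=> N N0.
  have hA : ((acount k cap N)%:R : R) <= y^-1 ^+ N.
    have := acount_upper (k:=k) (cap:=cap) y0 _ N.
    rewrite exprVn -div1r ler_pdivlMr ?exprn_gt0 //; apply => N'.
    by rewrite -Py; apply: blocks_sum_le; rewrite ltW.
  have hP : ((Pcard (Pk k cap) N)%:R : R) <= y^-1 ^+ N.
    by apply: le_trans hA; rewrite ler_nat; apply: Pcard_upper.
  rewrite -[X in _ <= X](powR_root (ltW (lt_trans ltr01 yi1)) N0).
  by apply: ge0_ler_powR; rewrite ?nnegrE ?invr_ge0 ?exprn_ge0 // ltW // (lt_trans ltr01 yi1).
apply/cvgrPdist_le => e e0.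
set w := Num.max (y^-1 - e / 2) ((1 + y^-1) / 2).
have w_lt : w < y^-1 by rewrite /w gt_max; apply/andP; split; lra.
have w_gt1 : 1 < w by rewrite /w lt_max; apply/orP; right; lra.
have w_ge : y^-1 - e / 2 <= w by rewrite /w le_max lexx.
have w0 : 0 < w by lra.
set z := w^-1.
have z0 : 0 < z by rewrite invr_gt0.
have z1 : z < 1 by rewrite invf_lt1.
have yz : y < z by rewrite -[y]invrK ltf_pV2 ?posrE ?invr_gt0.
have zw : z * w = 1 by rewrite mulVf // gt_eqF.
have Pz : 1 < Phi k cap z by rewrite -Py; apply: Phi_lt => //; rewrite ltW.
set d := Phi k cap z - 1.
have d0 : 0 < d by rewrite subr_gt0.
set Mc := \sum_(a <- iota 0 k) cap a.
have capM : forall a, (a < k)%N -> (cap a <= Mc)%N.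
  move=> a ak; rewrite /Mc (bigD1_seq a) ?iota_uniq ?mem_iota //=.
  exact: leq_addr.
have kpos : (0 : R) < k%:R by rewrite ltr0n.
have [N1 HN1] := @eventually_small R z (d * (1 - z) / k%:R)
   (ltac:(by rewrite ltW //= z1)) (ltac:(by rewrite divr_gt0 // mulr_gt0 // subr_gt0)).
set M := maxn Mc N1.
have hyp : forall N, (M <= N)%N -> 1 <= \sum_(p <- blocks k cap N) z ^+ p.2.
  move=> N MN.
  have H1 : 0 <= z < 1 by rewrite ltW //= z1.
  have H2 : forall a, (a < k)%N -> (cap a <= M)%N.
    by move=> a ak; apply: leq_trans (capM a ak) (leq_maxl _ _).
  apply: le_trans (blocks_sum_ge (k:=k) (cap:=cap) H1 H2 MN).
  have hz : z ^+ M.+1 <= d * (1 - z) / k%:R.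
    by apply: HN1; apply: leq_trans (leq_maxr Mc N1) (leqnSn _).
  have h2 : k%:R * (z ^+ M.+1 / (1 - z)) <= d.
    have hz1 : 1 - z != 0 by rewrite subr_eq0 eq_sym lt_eqF.
    have hk : k%:R != 0 :> R by rewrite gt_eqF.
    have -> : d = k%:R * ((d * (1 - z) / k%:R) / (1 - z)).
      by field; rewrite hz1 hk.
    by rewrite ler_pM2l // ler_pM2r ?invr_gt0 ?subr_gt0.
  by move: h2; rewrite /d lerBrDr addrC -lerBrDr.
have low := acount_lower (k:=k) (cap:=cap) z0 (ltW z1) k0 hyp.
set C := z ^+ (M + k).
have C0 : 0 < C by rewrite exprn_gt0.
have C1 : C <= 1 by rewrite exprn_ile1 // ltW.
have lowP : forall N, (k <= N)%N -> C * w ^+ N <= (Pcard (Pk k cap) N)%:R.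
  move=> N kN; have := Pcard_lower k cap (N - k); rewrite subnKC // => hP.
  apply: le_trans (_ : ((acount k cap (N - k)%N)%:R : R) <= _); last by rewrite ler_nat.
  have := low (N - k)%N.
  have e1 : C * w ^+ N = z ^+ M * w ^+ (N - k)%N.
    have wN : w ^+ N = w ^+ (N - k)%N * w ^+ k by rewrite -exprD subnK.
    have zk : z ^+ k * w ^+ k = 1 by rewrite -exprMn zw expr1n.
    rewrite /C exprD wN -[RHS]mulr1 -zk; ring.
  rewrite e1 -ler_pdivlMr ?exprn_gt0 // => h; apply: le_trans h _.
  by rewrite /z exprVn.
set L := ln C.
have L0 : L <= 0 by rewrite /L ln_le0.
near=> N.
have kN : (k <= N)%N by near: N; exact: nbhs_infty_ge.
have N0 : (0 < N)%N by near: N; exact: nbhs_infty_gt.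
have rN : (- L * w * 2) / e <= N%:R by near: N; exact: nbhs_infty_ger.
have Npos : (0 : R) < N%:R by rewrite ltr0n.
rewrite ger0_norm ?subr_ge0 ?up //.
have hl : C `^ (N%:R^-1) * w <= (Pcard (Pk k cap) N)%:R `^ (N%:R^-1).
  have -> : C `^ (N%:R^-1) * w = C `^ (N%:R^-1) * (w ^+ N) `^ (N%:R^-1).
    by rewrite powR_root // ltW.
  rewrite -powRM; last 2 first.
  - exact: ltW.
  - by rewrite exprn_ge0 // ltW.
  have r0 : (0 : R) <= N%:R^-1 by rewrite invr_ge0 ler0n.
  apply: (ge0_ler_powR r0); rewrite ?nnegrE ?ler0n //; last exact: lowP.
  by rewrite mulr_ge0 // exprn_ge0 // ltW.
have hC : 1 + N%:R^-1 * L <= C `^ (N%:R^-1).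
  by rewrite /powR gt_eqF // expR_ge1Dx.
have hr : - (L * w * 2) <= N%:R * e by rewrite -ler_pdivrMr // -mulNr -mulNr.
have key : - (e / 2) <= N%:R^-1 * L * w.
  by rewrite -mulrA; apply: key_aux; rewrite // mulrA.
exact: (fin_aux w0 hl hC key w_ge).
Unshelve. all: by end_near.
Qed.

Definition capset (cap : nat -> nat) j m := fun a => if a == j then m else cap a.

Lemma Phi_capset (R : realType) k cap j m (y : R) : (j < k)%N -> cap j = 0%N ->
  (0 < m)%N -> y != 1 ->
  Phi k (capset cap j m) y = Phi k cap y - y ^+ m.+1 / (1 - y).
Proof.
move=> jk cj m0 y1.
have ji : j \in iota 0 k by rewrite mem_iota.
rewrite /Phi !(bigD1_seq j ji (iota_uniq 0 k)) /=.
have -> : \sum_(i <- iota 0 k | i != j) gfun (capset cap j m) i y =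
          \sum_(i <- iota 0 k | i != j) gfun cap i y.
  by apply: eq_bigr => a aj; rewrite /gfun /capset (negbTE aj).
rewrite /gfun /capset eqxx cj eqxx (negbTE (lt0n_neq0 m0)) geo_eq //.
have h1 : 1 - y != 0 by rewrite subr_eq0 eq_sym.
by field.
Qed.

Lemma cont_sum (R : realType) (s : seq nat) (F : nat -> R -> R) x :
  (forall a, {for x, continuous (F a)}) ->
  {for x, continuous (fun y => \sum_(a <- s) F a y)}.
Proof.
move=> H; elim: s => [|a s IH].
  have -> : (fun y : R => \sum_(a <- [::]) F a y) = cst 0.
    by apply: funext => y; rewrite big_nil.
  exact: cst_continuous.
have -> : (fun y : R => \sum_(b <- a :: s) F b y) = (F a) + (fun y => \sum_(b <- s) F b y).
  by apply: funext => y; rewrite big_cons.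
exact: continuousD.
Qed.

Lemma gfun_cont (R : realType) cap a (x : R) : x != 1 -> {for x, continuous (gfun cap a)}.
Proof.
move=> x1.
have -> : gfun cap a = if cap a == 0%N then (fun y : R => y * (1 - y)^-1) else geo (cap a).
  by apply: funext => y; rewrite /gfun; case: eqP.
case: eqP => _.
  apply: (@continuousM R R (fun y : R => y) (fun y => (1 - y)^-1)); first exact: cvg_id.
  apply: continuousV; first by rewrite subr_eq0 eq_sym.
  have -> : (fun y : R => 1 - y) = (cst 1 : R -> R) - (fun y => y) by apply: funext.
  by apply: continuousB; [exact: cst_continuous | exact: cvg_id].
have -> : geo (cap a) = (fun y : R => \sum_(t <- iota 1 (cap a)) y ^+ t) by [].
by apply: cont_sum => t; apply: exprn_continuous.
Qed.

Lemma Phi_cont (R : realType) k cap (x : R) : x != 1 -> {for x, continuous (Phi k cap)}.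
Proof.
move=> x1; have -> : Phi k cap = (fun y : R => \sum_(a <- iota 0 k) gfun cap a y) by [].
by apply: cont_sum => a; apply: gfun_cont.
Qed.

Lemma gfun_ge0 (R : realType) cap a (y : R) : 0 <= y < 1 -> 0 <= gfun cap a y.
Proof.
move=> /andP [y0 y1]; rewrite /gfun; case: eqP => _; last exact: geo_ge0.
by rewrite divr_ge0 // subr_ge0 ltW.
Qed.

Lemma root_exists (R : realType) k cap j : (0 < k)%N -> (j < k)%N -> (2 <= cap j)%N ->
  exists y : R, [/\ 0 < y, y < 1 & Phi k cap y = 1].
Proof.
move=> k0 jk cj.
set a := (k%:R + 1)^-1 : R.
set b := 2 / 3 : R.
have kR : (1 : R) <= k%:R by rewrite ler1n.
have a0 : 0 < a by rewrite invr_gt0; lra.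
have ab : a <= b.
  rewrite /a /b; apply: (@le_trans _ _ (2^-1)); last lra.
  rewrite lef_pV2 ?posrE; lra.
have b1 : b < 1 by rewrite /b; lra.
have fa : Phi k cap a <= 1.
  apply: (@le_trans _ _ (\sum_(i <- iota 0 k) (a / (1 - a)))).
    apply: ler_sum => i _; rewrite /gfun; case: eqP => _ //.
    by apply: geo_le; rewrite ltW //= (le_lt_trans ab b1).
  rewrite sum_const_iota /a.
  have h1 : (k%:R + 1 : R) != 0 by apply/eqP; lra.
  have h2 : (k%:R : R) != 0 by apply/eqP; lra.
  have -> : (k%:R : R) * ((k%:R + 1)^-1 / (1 - (k%:R + 1)^-1)) = 1.
    by field; rewrite h1 addrK h2.
  exact: lexx.
have fb : 1 <= Phi k cap b.
  have ji : j \in iota 0 k by rewrite mem_iota.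
  rewrite /Phi (bigD1_seq j ji (iota_uniq 0 k)) /=.
  apply: (@le_trans _ _ (gfun cap j b)); last first.
    rewrite lerDl; apply: sumr_ge0 => i _; apply: gfun_ge0; rewrite b1 andbT /b; lra.
  rewrite /gfun; have -> : (cap j == 0%N) = false by case: (cap j) cj.
  apply: (@le_trans _ _ (geo 2 b)); last by apply: geo_mono => //; rewrite /b; lra.
  rewrite /geo /= !big_cons big_nil /b; lra.
have cont : {within `[a, b], continuous (Phi k cap)}.
  apply: continuous_in_subspaceT => x xin; apply: Phi_cont.
  move: xin; rewrite inE /= in_itv /= => /andP [_ xb]; apply/eqP => x1.
  by move: xb; rewrite x1; lra.
have [|c cin fc] := IVT ab cont (v := 1).
  by rewrite ge_min fa /= le_max fb orbT.
move: cin; rewrite in_itv /= => /andP [ac cb].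
exists c; split => //; [exact: lt_le_trans ac | exact: le_lt_trans b1].
Qed.

Lemma step (R : realType) k cap j (y e : R) : (0 < k)%N -> (j < k)%N -> cap j = 0%N ->
  0 < y -> y < 1 -> Phi k cap y = 1 -> 0 < e ->
  exists m (y' : R), [/\ 0 < y', y' < 1, Phi k (capset cap j m) y' = 1
                      & y^-1 - e < y'^-1 < y^-1].
Proof.
move=> k0 jk cj y0 y1 Py e0.
have yi1 : 1 < y^-1 by rewrite invf_gt1.
set w := Num.max (y^-1 - e / 2) ((1 + y^-1) / 2).
have w_lt : w < y^-1 by rewrite /w gt_max; apply/andP; split; lra.
have w_gt1 : 1 < w by rewrite /w lt_max; apply/orP; right; lra.
have w_ge : y^-1 - e / 2 <= w by rewrite /w le_max lexx.
have w0 : 0 < w by lra.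
set z := w^-1.
have z0 : 0 < z by rewrite invr_gt0.
have z1 : z < 1 by rewrite invf_lt1.
have yz : y < z by rewrite -[y]invrK ltf_pV2 ?posrE ?invr_gt0.
have Pz : 1 < Phi k cap z by rewrite -Py; apply: Phi_lt => //; rewrite ltW.
set d := Phi k cap z - 1.
have d0 : 0 < d by rewrite subr_gt0.
have h1z : 0 < 1 - z by rewrite subr_gt0.
have [N1 HN1] := @eventually_small R z (d * (1 - z))
   (ltac:(by rewrite ltW //= z1)) (ltac:(by rewrite mulr_gt0)).
set m := maxn 2 N1.
have m2 : (2 <= m)%N by apply: leq_maxl.
have m0 : (0 < m)%N by apply: leq_trans m2.
have cj' : (2 <= capset cap j m j)%N by rewrite /capset eqxx.
have [y' [y'0 y'1 Py']] := root_exists R k0 jk cj'.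
exists m, y'; split => //.
have Pz' : 1 <= Phi k (capset cap j m) z.
  rewrite Phi_capset //; last by rewrite lt_eqF.
  have hz : z ^+ m.+1 <= d * (1 - z).
    by apply: HN1; apply: leq_trans (leq_maxr 2 N1) (leqnSn _).
  have : z ^+ m.+1 / (1 - z) <= d by rewrite ler_pdivrMr.
  by rewrite /d; lra.
have yy' : y < y'.
  rewrite ltNge; apply/negP => y'y.
  have : Phi k (capset cap j m) y' <= Phi k (capset cap j m) y.
    by apply: Phi_le => //; rewrite ltW.
  rewrite Py' Phi_capset //; last by rewrite lt_eqF.
  rewrite Py; have : 0 < y ^+ m.+1 / (1 - y) by rewrite divr_gt0 ?exprn_gt0 ?subr_gt0.
  lra.
have y'z : y' <= z.
  rewrite leNgt; apply/negP => zy'.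
  have : Phi k (capset cap j m) z < Phi k (capset cap j m) y'.
    by apply: Phi_lt => //; rewrite ltW.
  by rewrite Py'; lra.
apply/andP; split.
  have : z^-1 <= y'^-1 by rewrite lef_pV2 ?posrE.
  by rewrite /z invrK; lra.
by rewrite ltf_pV2 ?posrE.
Qed.

Lemma main_ind (R : realType) k d : (0 < k)%N -> (d <= k)%N ->
  forall cap (y : R), (forall a, (k - d <= a)%N -> cap a = 0%N) ->
  0 < y -> y < 1 -> Phi k cap y = 1 ->
  acc_below_iter d (@growth_constants R) y^-1.
Proof.
move=> k0; elim: d => [|d IH] dk cap y hcap y0 y1 Py.
  by rewrite /acc_below_iter /=; exact: (in_S k0 y0 y1 Py).
rewrite /acc_below_iter iterS /acc_below /= => e e0.
set j := (k - d.+1)%N.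
have jk : (j < k)%N by rewrite /j; lia.
have cj : cap j = 0%N by apply: hcap; rewrite /j.
have [m [y' [y'0 y'1 Py' /andP [h1 h2]]]] := step k0 jk cj y0 y1 Py e0.
exists y'^-1; split => //.
apply: (IH (ltnW dk) _ y' _ y'0 y'1 Py').
move=> a da; rewrite /capset.
have -> : (a == j) = false by rewrite /j; apply/eqP; lia.
apply: hcap; lia.
Qed.

Theorem corollary32 (R : realType) (n : nat) :
  (2 <= n)%N -> acc_below_iter n.-1 (@growth_constants R) (n%:R : R).
Proof.
move=> n2.
set k := n.-1.
have k0 : (0 < k)%N by rewrite /k; lia.
have nk : n = k.+1 by rewrite /k; lia.
have nR : (n%:R : R) = k%:R + 1 by rewrite nk -addn1 natrD.
have kR : (1 : R) <= k%:R by rewrite ler1n.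
have y0 : (0 : R) < n%:R^-1 by rewrite invr_gt0 nR; lra.
have y1 : (n%:R^-1 : R) < 1 by rewrite invf_lt1 nR; lra.
have Py : Phi k (fun _ => 0%N) (n%:R^-1 : R) = 1.
  rewrite /Phi /gfun /= sum_const_iota nR.
  have h1 : (k%:R + 1 : R) != 0 by apply/eqP; lra.
  have h2 : (k%:R : R) != 0 by apply/eqP; lra.
  by field; rewrite h1 addrK h2.
have := @main_ind R k k k0 (leqnn k) (fun _ => 0%N) (n%:R^-1) (fun _ _ => erefl) y0 y1 Py.
by rewrite invrK.
Qed.
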